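(* Let $V=(x_1,\dots,x_n)$ be a list of $n$ real numbers in $[L,U]$, listed in non-decreasing order, and let $k$ be an integer with $k<n$. Then a $k$-maximal variance subset of $V$ can be obtained by removing $n-k$ consecutive elements of $V$, i.e. there exists a $k$-maximal variance subset of the form $\{x_1,\dots,x_i\}\cup\{x_{i+n-k+1},\dots,x_n\}$ for some $0\le i\le k$.
   Context: For a finite (multi)set $Q$ of reals with $|Q|=k$, $\mathrm{Var}[Q]=\frac{1}{k}\sum_{q\in Q}(q-\mu_Q)^2$ with $\mu_Q=\frac1k\sum_{q\in Q}q$. A subset $Q\subset V$ (a choice of $k$ of the $n$ entries) is a $k$-maximal variance subset of $V$ if $|Q|=k$ and $\mathrm{Var}[Q']\le\mathrm{Var}[Q]$ for every $Q'\subset V$ with $|Q'|=k$. *)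

(* Defs.v *)
From HB Require Import structures.
From mathcomp Require Import all_boot all_order all_algebra.
Set Implicit Arguments. Unset Strict Implicit. Unset Printing Implicit Defensive.
Import Order.TTheory GRing.Theory Num.Theory.
Local Open Scope ring_scope.

(* A list V = (x_1,...,x_n) is a function x : 'I_n -> R (index i <-> x_{i+1}).
   A sub(multi)set Q of V is a set of indices Q : {set 'I_n}. *)

Definition mean (R : realFieldType) (n : nat) (x : 'I_n -> R) (Q : {set 'I_n}) : R :=
  (\sum_(i in Q) x i) / #|Q|%:R.

Definition var (R : realFieldType) (n : nat) (x : 'I_n -> R) (Q : {set 'I_n}) : R :=
  (\sum_(i in Q) (x i - mean x Q) ^+ 2) / #|Q|%:R.

Definition kmaxvar (R : realFieldType) (n : nat) (x : 'I_n -> R) (k : nat)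
  (Q : {set 'I_n}) : Prop :=
  #|Q| = k /\ forall Q' : {set 'I_n}, #|Q'| = k -> var x Q' <= var x Q.

(* Main.v *)
Require Import Defs.
From HB Require Import structures.
From mathcomp Require Import all_boot all_order all_algebra.
From mathcomp Require Import zify ring lra.
Import Order.TTheory GRing.Theory Num.Theory.
Local Open Scope ring_scope.

Lemma card_lt (n b : nat) : #|[set t : 'I_n | (t < b)%N]| = minn b n.
Proof.
case: (leqP n b) => hb.
  rewrite (_ : [set _ | _] = setT); last by apply/setP => t; rewrite !inE (leq_trans (ltn_ord t) hb).
  by rewrite cardsT card_ord; lia.
have hbn : (b <= n)%N by apply: ltnW.
rewrite (_ : [set _ | _] = widen_ord hbn @: setT).
  by rewrite card_imset ?cardsT ?card_ord; [lia| move=> u v /(congr1 val) /= h; exact: val_inj].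
apply/setP => t; rewrite !inE; apply/idP/imsetP.
  move=> ht; exists (Ordinal ht) => //; exact: val_inj.
by case=> u _ ->; rewrite /= ltn_ord.
Qed.

Lemma card_int (n a b : nat) : (a <= b)%N ->
  #|[set t : 'I_n | (a <= t < b)%N]| = (minn b n - minn a n)%N.
Proof.
move=> hab.
have -> : [set t : 'I_n | (a <= t < b)%N] = [set t : 'I_n | (t < b)%N] :\: [set t : 'I_n | (t < a)%N].
  by apply/setP => t; rewrite !inE -leqNgt andbC.
rewrite cardsD (setIidPr _) ?card_lt //.
by apply/subsetP => t; rewrite !inE => h; apply: leq_trans h hab.
Qed.

Lemma varE (R : realFieldType) (n : nat) (x : 'I_n -> R) (Q : {set 'I_n}) :
  var x Q = (\sum_(i in Q) x i ^+ 2) / #|Q|%:R - (mean x Q) ^+ 2.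
Proof.
rewrite /var.
set m := mean x Q. have hm : mean x Q = m by []. clearbody m.
have -> : \sum_(i in Q) (x i - m) ^+ 2 =
   \sum_(i in Q) x i ^+ 2 - (m *+ 2) * \sum_(i in Q) x i + m ^+ 2 *+ #|Q|.
  rewrite mulr_sumr -sumrB -sumr_const -big_split /=.
  apply: eq_bigr => i _; move: (x i) => a. ring.
case: (posnP #|Q|) => hQ.
  by rewrite -hm /mean hQ invr0 !mulr0; ring.
have hk : (#|Q|%:R : R) != 0 by rewrite pnatr_eq0 -lt0n.
have hs : \sum_(i in Q) x i = m * #|Q|%:R by rewrite -hm /mean divfK.
rewrite hs -mulr_natr; field.
exact: hk.
Qed.

Lemma varU1 (R : realFieldType) (n : nat) (x : 'I_n -> R) (S : {set 'I_n}) y :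
  y \notin S ->
  var x (y |: S) = (x y ^+ 2 + \sum_(i in S) x i ^+ 2) / (#|S|.+1)%:R
     - ((x y + \sum_(i in S) x i) / (#|S|.+1)%:R) ^+ 2.
Proof.
move=> hy; rewrite varE /mean cardsU1 hy !big_setU1 //.
Qed.

Lemma convex3 (R : realFieldType) (t s1 s2 y1 yp y2 : R) :
  0 <= t -> t <= 1 -> y1 <= yp -> yp <= y2 ->
  let f := fun y => (y ^+ 2 + s2) * t - ((y + s1) * t) ^+ 2 in
  f yp <= f y1 \/ f yp <= f y2.
Proof.
move=> t0 t1 h1 h2 f.
have id : (y2 - yp) * (f y1 - f yp) + (yp - y1) * (f y2 - f yp)
   = (t - t ^+ 2) * ((y2 - yp) * (yp - y1) * (y2 - y1)).
  rewrite /f; ring.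
have hA : 0 <= (t - t ^+ 2) * ((y2 - yp) * (yp - y1) * (y2 - y1)).
  apply: mulr_ge0; first nra.
  apply: mulr_ge0; [apply: mulr_ge0|]; lra.
case: (lerP (f yp) (f y2)) => hf2; first by right.
left.
case: (ltrP y1 yp) => hy.
  nra.
have -> : y1 = yp by lra.
by [].
Qed.

Definition Qs n k i : {set 'I_n} := [set j : 'I_n | (j < i)%N || (i + (n - k) <= j)%N].

Lemma compl_Qs n k i : ~: Qs n k i = [set t : 'I_n | (i <= t < i + (n - k))%N].
Proof. by apply/setP => t; rewrite !inE negb_or -!leqNgt -ltnNge. Qed.

Lemma card_Qs n k i : (k < n)%N -> (i <= k)%N -> #|Qs n k i| = k.
Proof.
move=> hk hi.
have := cardsC (Qs n k i); rewrite card_ord compl_Qs card_int; last by lia.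
lia.
Qed.

Lemma interval_case n k (Q : {set 'I_n}) : (k < n)%N -> #|Q| = k ->
  (forall a p b : 'I_n, a \notin Q -> p \in Q -> b \notin Q -> (a < p)%N -> (p < b)%N -> False) ->
  exists2 i, (i <= k)%N & Q = Qs n k i.
Proof.
move=> hk hQ hno.
have hC : #|~: Q| = (n - k)%N by have := cardsC Q; rewrite card_ord; lia.
have [c0 hc0] : {c0 | c0 \in ~: Q}.
  by apply/sigW/set0Pn; rewrite -card_gt0 hC; lia.
case: (arg_minnP (fun c : 'I_n => val c) hc0) => lo hlo0 hmin0.
have hlo : lo \in ~: Q := hlo0.
have hmin : forall c : 'I_n, c \in ~: Q -> (lo <= c)%N := hmin0.
clear hlo0 hmin0.
have hup : forall c, c \in ~: Q -> (c < lo + (n - k))%N.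
  move=> c hc.
  have hlc := hmin c hc.
  have hsub : [set t : 'I_n | (lo <= t < c.+1)%N] \subset ~: Q.
    apply/subsetP => t; rewrite inE => /andP [h1 h2].
    rewrite inE; apply/negP => htQ.
    move: hlo hc; rewrite !inE => hlo hc.
    have htlo : (t : nat) != lo by apply/eqP => /val_inj e; move: htQ; rewrite e (negbTE hlo).
    have htc : (t : nat) != c by apply/eqP => /val_inj e; move: htQ; rewrite e (negbTE hc).
    apply: (hno lo t c) => //; lia.
  have := subset_leq_card hsub; rewrite card_int ?hC; last by lia.
  have := ltn_ord c; have := ltn_ord lo; lia.
have hsub : ~: Q \subset [set t : 'I_n | (lo <= t < lo + (n - k))%N].
  by apply/subsetP => t ht; rewrite inE hmin // hup.
have hJ := subset_leq_card hsub.
rewrite card_int in hJ; last by lia.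
have hlok : (lo <= k)%N by move: hJ; rewrite hC; have := ltn_ord lo; lia.
exists lo => //.
have e : ~: Q = ~: Qs n k lo.
  apply/eqP; rewrite compl_Qs eqEcard hsub card_int; last by lia.
  rewrite hC; lia.
by rewrite -(setCK Q) e setCK.
Qed.

Lemma keyab n (Q S : {set 'I_n}) (a p b : 'I_n) : S = Q :\ p -> (a < p)%N -> (p < b)%N ->
  (forall c : 'I_n, c \notin Q -> (a <= c <= b)%N) ->
  (forall c : 'I_n, c \notin a |: S -> (a < c <= b)%N) /\
  (forall c : 'I_n, c \notin b |: S -> (a <= c < b)%N).
Proof.
move=> -> hap hpb hab; split.
  move=> c; rewrite !inE negb_or negb_and negbK => /andP [ca /orP [/eqP -> | /hab h]].
    lia.
  have ca' : (c : nat) != a := ca.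
  lia.
move=> c; rewrite !inE negb_or negb_and negbK => /andP [ca /orP [/eqP -> | /hab h]].
  lia.
have ca' : (c : nat) != b := ca.
lia.
Qed.

Lemma swap_step (R : realFieldType) n k (x : 'I_n -> R)
  (hsort : forall i j : 'I_n, (i <= j)%N -> x i <= x j)
  (Q : {set 'I_n}) (a p b : 'I_n) :
  #|Q| = k -> a \notin Q -> p \in Q -> b \notin Q -> (a < p)%N -> (p < b)%N ->
  (forall c : 'I_n, c \notin Q -> (a <= c <= b)%N) ->
  exists Q' : {set 'I_n}, [/\ #|Q'| = k, var x Q <= var x Q' &
     forall c c' : 'I_n, c \notin Q' -> c' \notin Q' -> (c' - c <= b - a - 1)%N].
Proof.
move=> hQ ha hp hb hap hpb hab.
set S := Q :\ p.
have eQ : Q = p |: S by rewrite /S setD1K.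
have pS : p \notin S by rewrite !inE eqxx.
have aS : a \notin S by rewrite !inE negb_and ha orbT.
have bS : b \notin S by rewrite !inE negb_and hb orbT.
have [keya keyb] := @keyab n Q S a p b (erefl S) hap hpb hab.
have hS : #|S|.+1 = k by rewrite -hQ (cardsD1 p Q) hp.
have hK : 0 <= (#|S|.+1)%:R^-1 :> R by rewrite invr_ge0 ler0n.
have hK1 : (#|S|.+1)%:R^-1 <= 1 :> R by rewrite invf_le1 ?ltr0Sn // ler1n.
have hxa : x a <= x p by apply: hsort; lia.
have hxb : x p <= x b by apply: hsort; lia.
have := @convex3 R _ (\sum_(i in S) x i) (\sum_(i in S) x i ^+ 2) _ _ _ hK hK1 hxa hxb => /= hc.
case: hc => hc.
  exists (a |: S); split.
  - by rewrite cardsU1 aS.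
  - by rewrite eQ varU1 // varU1.
  - move=> c c' /keya h1 /keya h2; clear -h1 h2; lia.
exists (b |: S); split.
- by rewrite cardsU1 bS.
- by rewrite eQ varU1 // varU1.
- move=> c c' /keyb h1 /keyb h2; clear -h1 h2; lia.
Qed.

Lemma reduce (R : realFieldType) n k (x : 'I_n -> R)
  (hsort : forall i j : 'I_n, (i <= j)%N -> x i <= x j) (hk : (k < n)%N)
  (Q : {set 'I_n}) : #|Q| = k ->
  (exists2 i, (i <= k)%N & Q = Qs n k i) \/
  (exists Q' : {set 'I_n}, exists lo hi : 'I_n,
     #|Q'| = k /\ var x Q <= var x Q' /\ lo \notin Q /\ hi \notin Q /\ (lo.+2 <= hi)%N /\
     forall c c' : 'I_n, c \notin Q' -> c' \notin Q' -> (c' - c <= hi - lo - 1)%N).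
Proof.
move=> hQ.
case: (boolP [exists a, exists p, exists b,
   [&& a \notin Q, p \in Q, b \notin Q, (a < p)%N & (p < b)%N]]) => hex; last first.
  left; apply: interval_case => // a p b ha hp hb h1 h2.
  apply: (negP hex); apply/existsP; exists a; apply/existsP; exists p; apply/existsP; exists b.
  by rewrite ha hp hb h1 h2.
right.
case/existsP: hex => a /existsP [p /existsP [b /and5P [ha hp hb h1 h2]]].
have haC : a \in ~: Q by rewrite inE.
case: (arg_minnP (fun c : 'I_n => val c) haC) => lo hlo0 hmin0.
case: (arg_maxnP (fun c : 'I_n => val c) haC) => hi hhi0 hmax0.
have hlo : lo \in ~: Q := hlo0.
have hmin : forall c : 'I_n, c \in ~: Q -> (lo <= c)%N := hmin0.
have hhi : hi \in ~: Q := hhi0.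
have hmax : forall c : 'I_n, c \in ~: Q -> (c <= hi)%N := hmax0.
clear hlo0 hmin0 hhi0 hmax0.
have hla := hmin a haC.
have hbh : (b <= hi)%N by apply: hmax; rewrite inE.
move: hlo hhi; rewrite !inE => hlo hhi.
have [|||Q' [hQ' hv hsp]] := @swap_step R n k x hsort Q lo p hi hQ hlo hp hhi.
- by clear -hla h1; lia.
- by clear -hbh h2; lia.
- by move=> c hc; rewrite hmin ?hmax ?inE.
exists Q', lo, hi; do !split => //.
by clear -hla h1 h2 hbh; lia.
Qed.

Lemma main_ind (R : realFieldType) n k (x : 'I_n -> R)
  (hsort : forall i j : 'I_n, (i <= j)%N -> x i <= x j) (hk : (k < n)%N) d :
  forall Q : {set 'I_n}, #|Q| = k ->
  (forall c c' : 'I_n, c \notin Q -> c' \notin Q -> (c' - c <= d)%N) ->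
  exists2 i, (i <= k)%N & var x Q <= var x (Qs n k i).
Proof.
elim: d => [|d IH] Q hQ hsp.
  case: (@reduce R n k x hsort hk Q hQ) => [[i hi ->]|[Q' [lo [hi [_ [_ [hlo [hhi [hlh _]]]]]]]]].
    by exists i.
  by have := hsp lo hi hlo hhi; clear -hlh; lia.
case: (@reduce R n k x hsort hk Q hQ) => [[i hi ->]|[Q' [lo [hi [hQ' [hv [hlo [hhi [hlh hsp']]]]]]]]].
  by exists i.
have := hsp lo hi hlo hhi => hd.
have hd' : (hi - lo - 1 <= d)%N by clear -hd hlh; lia.
have [i hik hvi] := IH Q' hQ' (fun c c' h h' => leq_trans (hsp' c c' h h') hd').
exists i => //; exact: le_trans hv hvi.
Qed.

Lemma argmax_nat (R : realFieldType) (f : nat -> R) m :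
  exists2 i, (i <= m)%N & forall j, (j <= m)%N -> f j <= f i.
Proof.
elim: m => [|m [i hi hmax]].
  by exists 0%N => // j; rewrite leqn0 => /eqP ->.
case: (lerP (f m.+1) (f i)) => h.
  exists i; first by apply: leqW.
  move=> j; rewrite leq_eqVlt => /orP [/eqP -> //| hj]; exact: hmax.
exists m.+1 => // j; rewrite leq_eqVlt => /orP [/eqP -> //| hj].
exact: le_trans (hmax j hj) (ltW h).
Qed.

Theorem mainTheorem3 (R : realFieldType) (n k : nat) (L U : R) (x : 'I_n -> R)
  (hLU : forall j, L <= x j <= U)
  (hsort : forall i j : 'I_n, (i <= j)%N -> x i <= x j)
  (hk : (k < n)%N) :
  exists2 i : nat, (i <= k)%N &
    kmaxvar x k [set j : 'I_n | (j < i)%N || (i + (n - k) <= j)%N].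
Proof.
have [i0 hi0 hmax] := @argmax_nat R (fun i => var x (Qs n k i)) k.
exists i0 => //; split; first exact: card_Qs.
move=> Q' hQ'.
have [j hj hv] := @main_ind R n k x hsort hk n Q' hQ'
  (fun c c' _ _ => leq_trans (leq_subr c c') (ltnW (ltn_ord c'))).
exact: le_trans hv (hmax j hj).
Qed.
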